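(* Let $n\ge2$, let $P$ be a partial $n$-Metric on a set $X$, and let $\{x_i\}_{i\in\mathbb{N}}$ be a Cauchy sequence in $X$. If $\{x_i\}$ has a special limit in $X$, then that special limit is unique.
   Context: Notation: $\langle a\rangle^k$ denotes the $k$-tuple $(a,\dots,a)$ inserted into an argument list. A partial $n$-Metric on $X$ is a function $P:X^n\to\mathbb{R}$ such that for all $x_1,\dots,x_n,a\in X$: (1) $P(\langle x_1\rangle^n)\le P(\langle x_1\rangle^{n-1},x_2)$; (2) $P$ is invariant under permutations of its arguments; (3) $P(\langle x_1\rangle^{n-1},x_2)=P(\langle x_1\rangle^n)$ and $P(\langle x_2\rangle^{n-1},x_1)=P(\langle x_2\rangle^n)$ iff $x_1=x_2$; (4) $P(x_1,\dots,x_n)\le P(x_1,\dots,x_{n-1},a)+P(\langle a\rangle^{n-1},x_n)-P(\langle a\rangle^n)$. $X$ carries the topology generated by the balls $B_\epsilon(x)=\{y\mid P(\langle x\rangle^{n-1},y)-P(\langle x\rangle^n)<\epsilon\}$; thus $a$ is a limit of $\{x_i\}$ iff for every $\epsilon>0$ there is $N$ with $P(\langle a\rangle^{n-1},x_i)-P(\langle a\rangle^n)<\epsilon$ for all $i>N$. $\{x_i\}$ is Cauchy with central distance $r\in\mathbb{R}$ if for every $\epsilon>0$ there is $N$ such that $|P(x_{i_1},\dots,x_{i_n})-r|<\epsilon$ for all $i_1,\dots,i_n>N$. A special limit of a Cauchy sequence with central distance $r$ is a limit $a$ with $P(\langle a\rangle^n)=r$. *)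

(* Defs.v *)
(* An n-ary function P : X^n -> R is represented as
   P : list X -> R, of which only the values on lists of length n matter.
   The k-tuple <a>^k is (repeat a k). *)
From Stdlib Require Import Reals List Permutation.
Open Scope R_scope.

Definition partial_n_metric {X : Type} (n : nat) (P : list X -> R) : Prop :=
  (forall x1 x2 : X, P (repeat x1 n) <= P (repeat x1 (n - 1)%nat ++ x2 :: nil)) /\
  (forall l l' : list X, length l = n -> Permutation l l' -> P l = P l') /\
  (forall x1 x2 : X,
     (P (repeat x1 (n - 1)%nat ++ x2 :: nil) = P (repeat x1 n) /\
      P (repeat x2 (n - 1)%nat ++ x1 :: nil) = P (repeat x2 n)) <-> x1 = x2) /\
  (forall (l : list X) (xn a : X), length l = (n - 1)%nat ->
     P (l ++ xn :: nil) <=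
       P (l ++ a :: nil) + P (repeat a (n - 1)%nat ++ xn :: nil) - P (repeat a n)).

(* a is a limit of x in the topology generated by the balls B_eps *)
Definition is_limit {X : Type} (n : nat) (P : list X -> R) (x : nat -> X) (a : X)
  : Prop :=
  forall eps : R, eps > 0 -> exists N : nat, forall i : nat, (i > N)%nat ->
    P (repeat a (n - 1)%nat ++ x i :: nil) - P (repeat a n) < eps.

Definition cauchy_central {X : Type} (n : nat) (P : list X -> R) (x : nat -> X) (r : R)
  : Prop :=
  forall eps : R, eps > 0 -> exists N : nat, forall idx : list nat,
    length idx = n -> Forall (fun i => (i > N)%nat) idx ->
    Rabs (P (map x idx) - r) < eps.

Definition is_cauchy {X : Type} (n : nat) (P : list X -> R) (x : nat -> X) : Prop :=
  exists r : R, cauchy_central n P x r.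

Definition special_limit {X : Type} (n : nat) (P : list X -> R) (x : nat -> X)
  (r : R) (a : X) : Prop :=
  cauchy_central n P x r /\ is_limit n P x a /\ P (repeat a n) = r.

(* Main.v *)
Require Import Defs.
From Stdlib Require Import Reals List Permutation Lra Lia.
Open Scope R_scope.

Lemma sumlem (X : Type) (n : nat) (P : list X -> R) (c : X) (e : R) :
  partial_n_metric n P -> (1 <= n)%nat -> 0 <= e ->
  forall l k, (length l + k = n)%nat ->
  Forall (fun y => P (repeat c (n-1) ++ y :: nil) - P (repeat c n) <= e) l ->
  P (repeat c k ++ l) <= P (repeat c n) + INR (length l) * e.
Proof.
  intros [H1 [H2 [H3 H4]]] Hn He l.
  induction l as [|y l IH]; intros k Hk HF.
  - simpl in Hk. rewrite app_nil_r. subst k. simpl. lra.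
  - apply Forall_cons_iff in HF as [Hy HF'].
    simpl in Hk.
    assert (HL : length (repeat c k ++ l) = (n - 1)%nat)
      by (rewrite length_app, repeat_length; lia).
    assert (E1 : P (repeat c k ++ y :: l) = P ((repeat c k ++ l) ++ y :: nil)).
    { apply H2. rewrite length_app, repeat_length; simpl; lia.
      eapply Permutation_trans. apply Permutation_sym, Permutation_middle.
      apply Permutation_cons_append. }
    assert (E2 : P ((repeat c k ++ l) ++ c :: nil) = P (repeat c (S k) ++ l)).
    { apply H2. rewrite length_app, HL; simpl; lia.
      simpl. apply Permutation_sym, Permutation_cons_append. }
    specialize (H4 _ y c HL).
    specialize (IH (S k) ltac:(lia) HF').
    rewrite E1. simpl length. rewrite S_INR. lra.
Qed.

Lemma cauchy_unique (X : Type) (n : nat) (P : list X -> R) (x : nat -> X) r1 r2 :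
  cauchy_central n P x r1 -> cauchy_central n P x r2 -> r1 = r2.
Proof.
  intros C1 C2.
  apply Rle_antisym; apply Rle_plus_epsilon; intros eps Heps;
  destruct (C1 (eps/2) ltac:(lra)) as [N1 HN1];
  destruct (C2 (eps/2) ltac:(lra)) as [N2 HN2];
  set (i := S (N1 + N2));
  assert (Hl : length (repeat i n) = n) by apply repeat_length;
  assert (F1 : Forall (fun j => (j > N1)%nat) (repeat i n))
    by (apply Forall_forall; intros z Hz; apply repeat_spec in Hz; unfold i in Hz; lia);
  assert (F2 : Forall (fun j => (j > N2)%nat) (repeat i n))
    by (apply Forall_forall; intros z Hz; apply repeat_spec in Hz; unfold i in Hz; lia);
  specialize (HN1 _ Hl F1); specialize (HN2 _ Hl F2);
  apply Rabs_def2 in HN1; apply Rabs_def2 in HN2; lra.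
Qed.

Lemma key (X : Type) (n : nat) (P : list X -> R) (x : nat -> X) (r : R) (a b : X) :
  (2 <= n)%nat -> partial_n_metric n P ->
  special_limit n P x r a -> special_limit n P x r b ->
  P (repeat a (n-1) ++ b :: nil) <= P (repeat a n).
Proof.
  intros Hn HP [C [La Ea]] [_ [Lb Eb]].
  pose proof HP as [H1 [H2 [H3 H4]]].
  rewrite Ea. apply Rle_plus_epsilon. intros eps Heps.
  set (e := eps / (INR n + 2)).
  assert (HnR : 0 <= INR n) by apply pos_INR.
  assert (He : 0 < e) by (unfold e; apply Rdiv_lt_0_compat; lra).
  assert (Heq : (INR n + 2) * e = eps) by (unfold e; field; lra).
  destruct (La e He) as [N1 HN1].
  destruct (Lb e He) as [N2 HN2].
  destruct (C e He) as [N3 HN3].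
  set (i := S (N1 + N2 + N3)).
  specialize (HN1 i ltac:(unfold i; lia)).
  specialize (HN2 i ltac:(unfold i; lia)).
  assert (Hl : length (repeat i n) = n) by apply repeat_length.
  assert (F : Forall (fun j => (j > N3)%nat) (repeat i n))
    by (apply Forall_forall; intros z Hz; apply repeat_spec in Hz; unfold i in Hz; lia).
  specialize (HN3 _ Hl F). rewrite map_repeat in HN3.
  apply Rabs_def2 in HN3.
  assert (Hrb : forall c : X, repeat c (n-1) ++ c :: nil = repeat c n).
  { intro c. replace n with (S (n-1)) at 2 by lia.
    clear. generalize (n-1)%nat. intro k. induction k as [|k IHk]; simpl; [reflexivity| rewrite IHk; reflexivity]. }
  assert (S1 : P (repeat (x i) (n-1) ++ b :: nil) <= r + INR n * e).
  { pose proof (sumlem X n P b e HP ltac:(lia) ltac:(lra)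
      (repeat (x i) (n-1) ++ b :: nil) 0) as S.
    rewrite length_app, repeat_length in S. simpl in S.
    replace (n - 1 + 1)%nat with n in S by lia.
    rewrite <- Eb. apply S. lia.
    apply Forall_app; split.
    - apply Forall_forall; intros z Hz; apply repeat_spec in Hz; subst z. lra.
    - constructor; [|constructor]. rewrite Hrb. lra. }
  assert (HL : length (repeat a (n-1)) = (n-1)%nat) by apply repeat_length.
  specialize (H4 _ b (x i) HL).
  rewrite Ea in HN1. rewrite Eb in HN2. lra.
Qed.

Theorem theorem4p15 (X : Type) (n : nat) (P : list X -> R) (x : nat -> X) :
  (2 <= n)%nat -> partial_n_metric n P -> is_cauchy n P x ->
  forall (ra rb : R) (a b : X),
    special_limit n P x ra a -> special_limit n P x rb b -> a = b.
Proof.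
  intros Hn HP _ ra rb a b Sa Sb.
  assert (ra = rb) by (apply (cauchy_unique X n P x); [apply Sa | apply Sb]).
  subst rb.
  pose proof HP as [H1 [H2 [H3 H4]]].
  apply H3. split; apply Rle_antisym.
  - apply (key X n P x ra); assumption.
  - apply H1.
  - apply (key X n P x ra); assumption.
  - apply H1.
Qed.
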